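(* Let $P$ be a subsemigroup of a group $Q$ and let $(X,P,T)$ be a directed semigroup action. Then $G(X,P,T)=\{(x,q,y)\in X\times Q\times X:\exists m,n\in P,\ q=mn^{-1},\ x\in U(m),\ y\in U(n),\ x\cdot m=y\cdot n\}$ is a subgroupoid of $X\times Q\times X$, the latter equipped with its natural groupoid structure over $X$: $(x,q,y)(y,q',z)=(x,qq',z)$ and $(x,q,y)^{-1}=(y,q^{-1},x)$.
   Context: $P\subset Q$, $PP\subset P$, $e\in P$. A right (partial) action of $P$ on a set $X$ is a subset $X*P\subset X\times P$ and a map $(x,m)\mapsto x\cdot m$ on $X*P$ such that $(x,e)\in X*P$ with $x\cdot e=x$ for all $x$, and for all $x,m,n$: $(x,mn)\in X*P$ iff $(x,m)\in X*P$ and $(x\cdot m,n)\in X*P$, in which case $(x\cdot m)\cdot n=x\cdot(mn)$. $U(m)=\{x:(x,m)\in X*P\}$. $m\le n$ iff $n=mp$ for some $p\in P$. The action is directed if for all $m,n\in P$ with $U(m)\cap U(n)\neq\emptyset$ there is $r\in P$ with $m\le r$, $n\le r$ and $U(m)\cap U(n)=U(r)$. *)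

(* Defs.v *)
Set Implicit Arguments.
Unset Strict Implicit.

Definition is_group (Q : Type) (mul : Q -> Q -> Q) (inv : Q -> Q) (e : Q) : Prop :=
  (forall a b c, mul a (mul b c) = mul (mul a b) c) /\
  (forall a, mul e a = a) /\ (forall a, mul a e = a) /\
  (forall a, mul (inv a) a = e) /\ (forall a, mul a (inv a) = e).

Definition is_subsemigroup_unit (Q : Type) (mul : Q -> Q -> Q) (e : Q) (P : Q -> Prop) : Prop :=
  (forall m n, P m -> P n -> P (mul m n)) /\ P e.

(* A right partial action of P on X: dom x m means (x,m) ∈ X*P, act x m = x·m
   (act is only meaningful on dom). *)
Definition partial_action (Q X : Type) (mul : Q -> Q -> Q) (e : Q) (P : Q -> Prop)
  (dom : X -> Q -> Prop) (act : X -> Q -> X) : Prop :=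
  (forall x m, dom x m -> P m) /\
  (forall x, dom x e /\ act x e = x) /\
  (forall x m n, P m -> P n ->
     (dom x (mul m n) <-> (dom x m /\ dom (act x m) n))) /\
  (forall x m n, P m -> P n -> dom x (mul m n) ->
     act (act x m) n = act x (mul m n)).

Definition ple (Q : Type) (mul : Q -> Q -> Q) (P : Q -> Prop) (m n : Q) : Prop :=
  exists p, P p /\ n = mul m p.

Definition directed_action (Q X : Type) (mul : Q -> Q -> Q) (P : Q -> Prop)
  (dom : X -> Q -> Prop) : Prop :=
  forall m n, P m -> P n -> (exists x, dom x m /\ dom x n) ->
    exists r, P r /\ ple mul P m r /\ ple mul P n r /\
      (forall x, (dom x m /\ dom x n) <-> dom x r).

Definition G_XPT (Q X : Type) (mul : Q -> Q -> Q) (inv : Q -> Q) (P : Q -> Prop)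
  (dom : X -> Q -> Prop) (act : X -> Q -> X) (g : X * Q * X) : Prop :=
  let '(x, q, y) := g in
  exists m n, P m /\ P n /\ q = mul m (inv n) /\ dom x m /\ dom y n /\
    act x m = act y n.

Definition subgroupoid (Q X : Type) (mul : Q -> Q -> Q) (inv : Q -> Q)
  (S : X * Q * X -> Prop) : Prop :=
  (forall x q y q' z, S (x, q, y) -> S (y, q', z) -> S (x, mul q q', z)) /\
  (forall x q y, S (x, q, y) -> S (y, inv q, x)).

(* Main.v *)
Require Import Defs.

Theorem lemma5p5 (Q X : Type) (mul : Q -> Q -> Q) (inv : Q -> Q) (e : Q)
  (P : Q -> Prop) (dom : X -> Q -> Prop) (act : X -> Q -> X) :
  is_group mul inv e ->
  is_subsemigroup_unit mul e P ->
  partial_action mul e P dom act ->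
  directed_action mul P dom ->
  subgroupoid mul inv (G_XPT mul inv P dom act).
Proof.
  intros [ass [el [er [il ir]]]] [Pm Pe] [hP [he [hdom hact]]] hdir.
  assert (invinv : forall a, inv (inv a) = a).
  { intro a. rewrite <- (er (inv (inv a))), <- (il a), ass, il, el. reflexivity. }
  assert (invmul : forall a b, inv (mul a b) = mul (inv b) (inv a)).
  { intros a b.
    assert (H : mul (mul (inv b) (inv a)) (mul a b) = e).
    { rewrite <- ass, (ass (inv a)), il, el, il. reflexivity. }
    transitivity (mul (mul (mul (inv b) (inv a)) (mul a b)) (inv (mul a b))).
    { rewrite H, el. reflexivity. }
    rewrite <- ass, ir, er. reflexivity.
    }
  split.
  - intros x q y q' z [m [n [Hm [Hn [Hq [Hx [Hy Hxy]]]]]]]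
                    [m' [n' [Hm' [Hn' [Hq' [Hy' [Hz Hyz]]]]]]].
    destruct (hdir n m' Hn Hm' (ex_intro _ y (conj Hy Hy')))
      as [r [Hr [[a [Ha Hra]] [[b [Hb Hrb]] Hiff]]]].
    assert (Hyr : dom y r) by (apply Hiff; auto).
    assert (Hyna : dom y (mul n a)) by (rewrite <- Hra; exact Hyr).
    assert (Hymb : dom y (mul m' b)) by (rewrite <- Hrb; exact Hyr).
    apply (proj1 (hdom _ _ _ Hn Ha)) in Hyna as Hyna'.
    apply (proj1 (hdom _ _ _ Hm' Hb)) in Hymb as Hymb'.
    destruct Hyna' as [_ Hyna']. destruct Hymb' as [_ Hymb'].
    exists (mul m a), (mul n' b).
    split; [auto|]. split; [auto|].
    split.
    { subst q q'. rewrite invmul.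
      assert (E : mul (inv n) m' = mul a (inv b)).
      { assert (E2 : mul n a = mul m' b) by (rewrite <- Hra; exact Hrb).
        transitivity (mul (mul (inv n) (mul m' b)) (inv b)).
        { rewrite <- !ass, ir, er. reflexivity. }
        rewrite <- E2, ass, il, el. reflexivity. }
      rewrite <- (ass m), (ass (inv n)), E, <- ass, <- (ass m). reflexivity. }
    split.
    { apply (proj2 (hdom _ _ _ Hm Ha)). rewrite Hxy. auto. }
    split.
    { apply (proj2 (hdom _ _ _ Hn' Hb)). rewrite <- Hyz. auto. }
    rewrite <- (hact x m a Hm Ha), <- (hact z n' b Hn' Hb).
    + rewrite Hxy, <- Hyz, (hact y n a Hn Ha), (hact y m' b Hm' Hb).
      * rewrite <- Hra, <- Hrb. reflexivity.
      * rewrite <- Hrb; exact Hyr.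
      * rewrite <- Hra; exact Hyr.
    + apply (proj2 (hdom _ _ _ Hn' Hb)). rewrite <- Hyz. auto.
    + apply (proj2 (hdom _ _ _ Hm Ha)). rewrite Hxy. auto.
  - intros x q y [m [n [Hm [Hn [Hq [Hx [Hy Hxy]]]]]]].
    exists n, m. repeat split; auto.
    subst q. rewrite invmul, invinv. reflexivity.
Qed.
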